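(* The following bilinear equations hold for all $k,N\in\mathbb{Z}$: \begin{align*} &\tau^{k+1}_{N+1}\tau^{k+2}_{N-1} -Q^{(k-4N+2)/2}\gamma^{-2}\alpha_0\tau^{k+3}_{N}\tau^{k}_{N} -Q^{-k+4N-2}\gamma^{4}{\alpha_0}^{-2}\tau^{k+1}_{N}\tau^{k+2}_{N}=0,\\ &\tau^{k+2}_{N+1}\tau^{k+1}_{N-1} -Q^{(k+4N+2)/2}\gamma^{2}\alpha_0\tau^{k+3}_{N}\tau^{k}_{N} -Q^{-k-4N-2}\gamma^{-4}{\alpha_0}^{-2}\tau^{k+2}_{N}\tau^{k+1}_{N}=0,\\ &Q^{-(3k-4N+4)/2}\gamma^{2}{\alpha_0}^{-3}\tau^{k+3}_{N}\tau^{k}_{N+1} -Q^{-3k+4N-4}\gamma^{4}{\alpha_0}^{-6}\tau^{k+1}_{N}\tau^{k+2}_{N+1} -\tau^{k+1}_{N+1}\tau^{k+2}_{N}=0,\\ &Q^{-(3k+4N+8)/2}\gamma^{-2}{\alpha_0}^{-3}\tau^{k+3}_{N+1}\tau^{k}_{N} -Q^{-3k-4N-8}\gamma^{-4}{\alpha_0}^{-6}\tau^{k+2}_{N}\tau^{k+1}_{N+1} -\tau^{k+2}_{N+1}\tau^{k+1}_{N}=0. \end{align*}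
   Context: Let $q,c,a_0,a_1,a_2\in\mathbb{C}^\times$ with $a_0a_1a_2=q$, and let $\tau_i,\overline{\tau}_i$ ($i\in\mathbb{Z}/3\mathbb{Z}$) be variables (the $\tau$ functions of the $q$-Painlevé III system). The extended affine Weyl group $\widetilde{W}((A_2+A_1)^{(1)})=\langle s_0,s_1,s_2,\pi,w_0,w_1,r\rangle$ acts on them (elements act on functions from the right, $w.F(a_i,\tau_j)=F(a_i.w,\tau_j.w)$) by: $s_i(a_i)=a_i^{-1}$, $s_i(a_{i\pm1})=a_{i\pm1}a_i$, $\pi(a_i)=a_{i+1}$, $w_0,w_1,r$ fix all $a_i$; $s_i(\tau_i)=\dfrac{u_i\tau_{i+1}\overline{\tau}_{i-1}+\overline{\tau}_{i+1}\tau_{i-1}}{u_i^{1/2}\overline{\tau}_i}$, $s_i(\overline{\tau}_i)=\dfrac{v_i\overline{\tau}_{i+1}\tau_{i-1}+\tau_{i+1}\overline{\tau}_{i-1}}{v_i^{1/2}\tau_i}$, $s_i$ fixes $\tau_j,\overline{\tau}_j$ for $j\neq i$; $\pi(\tau_i)=\tau_{i+1}$, $\pi(\overline{\tau}_i)=\overline{\tau}_{i+1}$; $w_0(\overline{\tau}_i)=\dfrac{a_{i+1}^{1/3}(\overline{\tau}_i\tau_{i+1}\tau_{i+2}+u_{i-1}\tau_i\overline{\tau}_{i+1}\tau_{i+2}+u_{i+1}^{-1}\tau_i\tau_{i+1}\overline{\tau}_{i+2})}{a_{i+2}^{1/3}\overline{\tau}_{i+1}\overline{\tau}_{i+2}}$,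 $w_0(\tau_i)=\tau_i$; $r(\tau_i)=\overline{\tau}_i$, $r(\overline{\tau}_i)=\tau_i$; where $u_i=q^{-1/3}c^{-2/3}a_i$, $v_i=q^{1/3}c^{2/3}a_i$. The translation $T_4=rw_0$ fixes $a_0,a_1,a_2$ and maps $c\mapsto qc$. Set $R_1=\pi^2s_1$ (so $R_1^2=T_1=\pi s_2 s_1$) and specialize $a_2=q^{1/2}$; then $R_1$ acts on parameters as $(a_0,a_1,c)\mapsto(q^{1/2}a_0,q^{-1/2}a_1,c)$. Define $\tau^k_N=R_1^kT_4^N(\tau_1)$ for $k,N\in\mathbb{Z}$ (so $\tau_0=\tau^{-2}_0$, $\tau_1=\tau^0_0$, $\tau_2=\tau^{-1}_0$, $\overline{\tau}_0=\tau^{-2}_1$, $\overline{\tau}_1=\tau^0_1$, $\overline{\tau}_2=\tau^{-1}_1$), and put $\alpha_0=a_0^{1/6}$, $\gamma=c^{1/6}$, $Q=q^{1/6}$. *)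

(* Defs.v *)
From HB Require Import structures.
From mathcomp Require Import all_boot all_order all_algebra.
From mathcomp Require Import mpoly.
From mathcomp Require Import reals complex.

Set Implicit Arguments.
Unset Strict Implicit.
Unset Printing Implicit Defensive.

Import Order.TTheory GRing.Theory Num.Theory.
Local Open Scope ring_scope.

Section Action.
Variable K : fieldType.

(* A point of the (unspecialized) phase space:
     A i  = a_i^{1/6},  cc = c^{1/6},  zz = q^{1/12}  (so A 0 * A 1 * A 2 = zz^2),
     tau i = tau_i,   taub i = \overline{tau}_i. *)
Record pt := Pt { A : 'I_3 -> K; cc : K; zz : K; tau : 'I_3 -> K; taub : 'I_3 -> K }.

Definition succ3 (i : 'I_3) : 'I_3 := inZp i.+1.
Definition pred3 (i : 'I_3) : 'I_3 := inZp (i + 2).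

(* u_i = q^{-1/3} c^{-2/3} a_i,  v_i = q^{1/3} c^{2/3} a_i, and their square roots *)
Definition u (p : pt) i := (zz p ^+ 4 * cc p ^+ 4)^-1 * A p i ^+ 6.
Definition uh (p : pt) i := (zz p ^+ 2 * cc p ^+ 2)^-1 * A p i ^+ 3.
Definition v (p : pt) i := zz p ^+ 4 * cc p ^+ 4 * A p i ^+ 6.
Definition vh (p : pt) i := zz p ^+ 2 * cc p ^+ 2 * A p i ^+ 3.

(* For a generator w, [w_map p] is the point whose coordinates are the values at p
   of the images w(a_i^{1/6}), w(c^{1/6}), w(q^{1/12}), w(tau_j), w(taub_j).
   Thus w(F) = F \o w_map, and the automorphism w1 w2 (= w1 \o w2) corresponds to
   the point map  w2_map \o w1_map. *)
Definition s_map (i : 'I_3) (p : pt) : pt :=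
  Pt (fun j => if j == i then (A p i)^-1 else A p j * A p i) (cc p) (zz p)
     (fun j => if j == i then
        (u p i * tau p (succ3 i) * taub p (pred3 i) + taub p (succ3 i) * tau p (pred3 i))
          / (uh p i * taub p i)
      else tau p j)
     (fun j => if j == i then
        (v p i * taub p (succ3 i) * tau p (pred3 i) + tau p (succ3 i) * taub p (pred3 i))
          / (vh p i * tau p i)
      else taub p j).

Definition pi_map (p : pt) : pt :=
  Pt (fun j => A p (succ3 j)) (cc p) (zz p)
     (fun j => tau p (succ3 j)) (fun j => taub p (succ3 j)).

(* w_0 : c -> c^{-1} (so c^{1/6} -> c^{-1/6}), a_i fixed, tau_i fixed;
   a_{i+1}^{1/3}/a_{i+2}^{1/3} = (A (i+1))^2 / (A (i+2))^2. *)
Definition w0_map (p : pt) : pt :=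
  Pt (A p) (cc p)^-1 (zz p) (tau p)
     (fun i =>
        let i1 := succ3 i in let i2 := succ3 (succ3 i) in let im := pred3 i in
        A p i1 ^+ 2 *
          (taub p i * tau p i1 * tau p i2 + u p im * tau p i * taub p i1 * tau p i2
           + (u p i1)^-1 * tau p i * tau p i1 * taub p i2)
        / (A p i2 ^+ 2 * taub p i1 * taub p i2)).

(* r : tau <-> taub, c -> q^{-1} c^{-1} (so c^{1/6} -> q^{-1/6} c^{-1/6}), a_i fixed. *)
Definition r_map (p : pt) : pt :=
  Pt (A p) (zz p ^+ 2 * cc p)^-1 (zz p) (taub p) (tau p).

(* R_1 = pi^2 s_1,  R_1^{-1} = s_1 pi,  T_4 = r w_0,  T_4^{-1} = w_0 r. *)
Definition R1_map : pt -> pt := s_map 1 \o pi_map \o pi_map.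
Definition R1inv_map : pt -> pt := pi_map \o s_map 1.
Definition T4_map : pt -> pt := w0_map \o r_map.
Definition T4inv_map : pt -> pt := r_map \o w0_map.

Definition iterZ (n : int) (f finv : pt -> pt) : pt -> pt :=
  match n with Posz m => iter m f | Negz m => iter m.+1 finv end.

(* Specialized point (a_2 = q^{1/2}, a_0 a_1 a_2 = q): coordinates
   x 0 = q^{1/12} = Q^{1/2},  x 1 = alpha_0 = a_0^{1/6},  x 2 = gamma = c^{1/6},
   x 3..5 = tau_0..tau_2,  x 6..8 = taub_0..taub_2. *)
Definition crd (x : 'I_9 -> K) (n : nat) : K := x (inord n).

Definition spec_pt (x : 'I_9 -> K) : pt :=
  Pt (fun j => if j == 0 then crd x 1 else if j == 1 then crd x 0 / crd x 1 else crd x 0)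
     (crd x 2) (crd x 0)
     (fun j => crd x (3 + j)) (fun j => crd x (6 + j)).

(* tau^k_N = R_1^k T_4^N (tau_1), evaluated at the specialized point x. *)
Definition tauKN (x : 'I_9 -> K) (k n : int) : K :=
  tau (iterZ n T4_map T4inv_map (iterZ k R1_map R1inv_map (spec_pt x))) 1.

End Action.

(* Main.v *)
Require Import Defs.
From HB Require Import structures.
From mathcomp Require Import all_boot all_order all_algebra.
From mathcomp Require Import mpoly.
From mathcomp Require Import reals complex.
From mathcomp Require Import ring.
From Stdlib Require Import FunctionalExtensionality.
Import Order.TTheory GRing.Theory Num.Theory.
Local Open Scope ring_scope.
Set Implicit Arguments.
Unset Strict Implicit.
Unset Printing Implicit Defensive.

Section Pw.
Variable K : fieldType.
Implicit Types p q : pt K.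

Lemma succ30 : succ3 0 = 1. Proof. by apply: val_inj. Qed.
Lemma succ31 : succ3 1 = (2:'I_3). Proof. by apply: val_inj. Qed.
Lemma succ32 : succ3 2 = 0. Proof. by apply: val_inj. Qed.
Lemma pred30 : Defs.pred3 0 = (2:'I_3). Proof. by apply: val_inj. Qed.
Lemma pred31 : Defs.pred3 1 = 0. Proof. by apply: val_inj. Qed.
Lemma pred32 : Defs.pred3 2 = 1. Proof. by apply: val_inj. Qed.
Lemma e01 : ((0:'I_3) == 1) = false. Proof. by []. Qed.
Lemma e02 : ((0:'I_3) == 2) = false. Proof. by []. Qed.
Lemma e10 : ((1:'I_3) == 0) = false. Proof. by []. Qed.
Lemma e12 : ((1:'I_3) == 2) = false. Proof. by []. Qed.
Lemma e20 : ((2:'I_3) == 0) = false. Proof. by []. Qed.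
Lemma e21 : ((2:'I_3) == 1) = false. Proof. by []. Qed.
Definition idxE := (succ30, succ31, succ32, pred30, pred31, pred32, e01,e02,e10,e12,e20,e21, eqxx).

Lemma I3_ind (P : 'I_3 -> Prop) : P 0 -> P 1 -> P 2 -> forall j, P j.
Proof.
move=> h0 h1 h2 [[|[|[|n]]] hn] //.
- by have -> : Ordinal hn = 0 by apply: val_inj.
- by have -> : Ordinal hn = 1 by apply: val_inj.
- by have -> : Ordinal hn = 2 by apply: val_inj.
Qed.

Lemma pt_eq p q : (forall j, A p j = A q j) -> cc p = cc q -> zz p = zz q ->
  (forall j, tau p j = tau q j) -> (forall j, taub p j = taub q j) -> p = q.
Proof.
case: p q => A1 c1 z1 t1 b1 [A2 c2 z2 t2 b2] /= hA -> -> ht hb.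
by rewrite (functional_extensionality _ _ hA) (functional_extensionality _ _ ht) (functional_extensionality _ _ hb).
Qed.

Definition Cst p := A p 1 = zz p / A p 0 /\ A p 2 = zz p.

Definition conds (a z c t0 t1 t2 b0 b1 b2 : K) : bool :=
 [&& a != 0, z != 0, c != 0, t0 != 0, t1 != 0, t2 != 0, b0 != 0, b1 != 0, b2 != 0,
  (t0 * b1 * b2 + (z * c) ^+ 4 * z ^+ 6 * b0 * t1 * b2) * ((z * c) ^+ 4 * z ^+ 6) + a ^+ 6 * b0 * b1 * t2 != 0,
  a ^+ 6 * t1 * b2 + b1 * t2 * (z * c) ^+ 4 != 0,
  (z * c) ^+ 4 * z ^+ 6 * b2 * t0 + t2 * b0 * a ^+ 6 != 0,
  z ^+ 2 * t2 * b0 + b2 * t0 * (c ^+ 4 * a ^+ 6) != 0,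
  (z * c) ^+ 4 * a ^+ 6 * b1 * t2 + t1 * b2 != 0,
  b2 * t0 * t1 * (c ^+ 4 * a ^+ 6) + z ^+ 2 * t2 * b0 * t1 + (z * c) ^+ 4 * t2 * t0 * b1 * c ^+ 4 != 0,
  b1 * t2 * t0 * (z * c) ^+ 4 + a ^+ 6 * t1 * b2 * t0 + c ^+ 4 * t1 * t2 * b0 * (z ^+ 2 * c ^+ 4) != 0,
  (b0 * t1 * t2 * c ^+ 4 + z ^+ 2 * t0 * b1 * t2) * z ^+ 2 + c ^+ 4 * a ^+ 6 * t0 * t1 * b2 * c ^+ 4 != 0,
  (t2 * b0 * b1 * a ^+ 6 + (z * c) ^+ 4 * z ^+ 6 * b2 * t0 * b1) * (z * c) ^+ 4 + b2 * b0 * t1 != 0 &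
  (t1 * b2 * b0 + (z * c) ^+ 4 * a ^+ 6 * b1 * t2 * b0) * ((z * c) ^+ 4 * z ^+ 6) + b1 * b2 * t0 != 0].

Definition allc p := conds (A p 0) (zz p) (cc p) (tau p 0) (tau p 1) (tau p 2) (taub p 0) (taub p 1) (taub p 2).

Ltac gen p := move: (A p 0) (zz p) (cc p) (tau p 0) (tau p 1) (tau p 2) (taub p 0) (taub p 1) (taub p 2) => a z c t0 t1 t2 b0 b1 b2 *.
Ltac unf := rewrite /R1_map /R1inv_map /T4_map /T4inv_map /= /s_map /pi_map /w0_map /r_map /= ?idxE /u /uh /v /vh /= ?idxE.
Ltac splitH := repeat match goal with H : is_true (_ && _) |- _ => case/andP: H => ? ? end.
Ltac closer := repeat match goal with |- is_true (_ && _) => apply/andP; split end; rewrite ?oner_neq0 //.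
Ltac gen2 p := move: (A p 0) (zz p) (cc p) (tau p 0) (tau p 1) (tau p 2) (taub p 0) (taub p 1) (taub p 2) => a z c t0 t1 t2 b0 b1 b2; rewrite /conds => Hc; splitH.
Ltac prep p H1 H2 Hc := rewrite /allc in Hc; apply: pt_eq; (try apply: I3_ind); unf; rewrite ?H1 ?H2; move: Hc; gen2 p.
Ltac fin := field; closer.

Lemma P1 p : Cst p -> allc p -> R1_map (R1inv_map p) = p.
Proof. case=> H1 H2 Hc; prep p H1 H2 Hc. all: fin. Qed.
Lemma P2 p : Cst p -> allc p -> R1inv_map (R1_map p) = p.
Proof. case=> H1 H2 Hc; prep p H1 H2 Hc. all: fin. Qed.
Lemma P3 p : Cst p -> allc p -> T4_map (T4inv_map p) = p.
Proof. case=> H1 H2 Hc; prep p H1 H2 Hc. all: fin. Qed.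
Lemma P4 p : Cst p -> allc p -> T4inv_map (T4_map p) = p.
Proof. case=> H1 H2 Hc; prep p H1 H2 Hc. all: fin. Qed.
Lemma P5 p : Cst p -> allc p -> R1_map (T4_map p) = T4_map (R1_map p).
Proof. case=> H1 H2 Hc; prep p H1 H2 Hc. all: fin. Qed.

Ltac base p H1 H2 Hc := rewrite /allc in Hc; unf; rewrite ?H1 ?H2; move: Hc; gen2 p; fin.

Lemma B1 p X1 X2 X3 X4 X5 X6 al be : Cst p -> allc p ->
 X1 = taub p 2 -> X2 = tau (T4inv_map p) 1 -> X3 = tau (R1_map p) 1 -> X4 = tau p 0 -> X5 = tau p 2 -> X6 = tau p 1 ->
 al = zz p ^+ 2 * (cc p ^+ 2)^-1 * (A p 0 / zz p ^+ 2) ->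
 be = (zz p ^+ 4)^-1 * cc p ^+ 4 * ((A p 0 / zz p ^+ 2) ^+ 2)^-1 ->
 X1 * X2 - al * X3 * X4 - be * X5 * X6 = 0.
Proof. move=> [H1 H2] Hc -> -> -> -> -> -> -> ->; base p H1 H2 Hc. Qed.

Lemma B2 p X1 X2 X3 X4 X5 X6 al be : Cst p -> allc p ->
 X1 = taub (R1_map p) 1 -> X2 = tau (T4inv_map p) 1 -> X3 = tau (R1_map (R1_map p)) 1 -> X4 = tau p 2 ->
 X5 = tau (R1_map p) 1 -> X6 = tau p 1 ->
 al = zz p ^+ 2 * cc p ^+ 2 * (A p 0 / zz p) ->
 be = (zz p ^+ 4)^-1 * (cc p ^+ 4)^-1 * ((A p 0 / zz p) ^+ 2)^-1 ->
 X1 * X2 - al * X3 * X4 - be * X5 * X6 = 0.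
Proof. move=> [H1 H2] Hc -> -> -> -> -> -> -> ->; base p H1 H2 Hc. Qed.

Lemma B3 p X1 X2 X3 X4 X5 X6 al be : Cst p -> allc p ->
 X1 = taub p 2 -> X2 = tau p 1 -> X3 = tau (R1_map p) 1 -> X4 = taub p 0 -> X5 = tau p 2 -> X6 = taub p 1 ->
 al = (zz p ^+ 4)^-1 * cc p ^+ 2 * ((A p 0 / zz p ^+ 2) ^+ 3)^-1 ->
 be = (zz p ^+ 8)^-1 * cc p ^+ 4 * ((A p 0 / zz p ^+ 2) ^+ 6)^-1 ->
 al * X3 * X4 - be * X5 * X6 - X1 * X2 = 0.
Proof. move=> [H1 H2] Hc -> -> -> -> -> -> -> ->; base p H1 H2 Hc. Qed.

Lemma B4 p X1 X2 X3 X4 X5 X6 al be : Cst p -> allc p ->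
 X1 = taub p 1 -> X2 = tau p 2 -> X3 = taub (R1_map p) 1 -> X4 = tau p 0 -> X5 = tau p 1 -> X6 = taub p 2 ->
 al = (zz p ^+ 8)^-1 * (cc p ^+ 2)^-1 * ((A p 0 / zz p ^+ 2) ^+ 3)^-1 ->
 be = (zz p ^+ 16)^-1 * (cc p ^+ 4)^-1 * ((A p 0 / zz p ^+ 2) ^+ 6)^-1 ->
 al * X3 * X4 - be * X5 * X6 - X1 * X2 = 0.
Proof. move=> [H1 H2] Hc -> -> -> -> -> -> -> ->; base p H1 H2 Hc. Qed.

Lemma zz_R1 p : zz (R1_map p) = zz p. Proof. by []. Qed.
Lemma zz_R1i p : zz (R1inv_map p) = zz p. Proof. by []. Qed.
Lemma zz_T4 p : zz (T4_map p) = zz p. Proof. by []. Qed.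
Lemma zz_T4i p : zz (T4inv_map p) = zz p. Proof. by []. Qed.
Lemma cc_R1 p : cc (R1_map p) = cc p. Proof. by []. Qed.
Lemma cc_R1i p : cc (R1inv_map p) = cc p. Proof. by []. Qed.
Lemma cc_T4 p : cc (T4_map p) = zz p ^+ 2 * cc p. Proof. by rewrite /= invrK. Qed.
Lemma cc_T4i p : cc (T4inv_map p) = cc p / zz p ^+ 2. Proof. by rewrite /= invfM invrK mulrC. Qed.
Lemma A_T4 p : A (T4_map p) = A p. Proof. by []. Qed.
Lemma A_T4i p : A (T4inv_map p) = A p. Proof. by []. Qed.
Lemma A0_R1 p : Cst p -> A (R1_map p) 0 = zz p * A p 0.
Proof. by case=> H1 H2; unf; rewrite H2. Qed.
Lemma A0_R1i p : Cst p -> A (R1inv_map p) 0 = A p 0 / zz p.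
Proof. by case=> H1 H2; unf; rewrite H1 invf_div. Qed.
Lemma Cst_R1 p : Cst p -> A p 0 != 0 -> zz p != 0 -> Cst (R1_map p).
Proof. by case=> H1 H2 h1 h2; rewrite /Cst; unf; rewrite H1 H2; split; field; closer. Qed.
Lemma Cst_R1i p : Cst p -> A p 0 != 0 -> zz p != 0 -> Cst (R1inv_map p).
Proof. by case=> H1 H2 h1 h2; rewrite /Cst; unf; rewrite H1 H2; split; field; closer. Qed.
Lemma Cst_T4 p : Cst p -> Cst (T4_map p). Proof. by []. Qed.
Lemma Cst_T4i p : Cst p -> Cst (T4inv_map p). Proof. by []. Qed.
Lemma tau_R1_0 p : tau (R1_map p) 0 = tau p 2. Proof. by unf. Qed.
Lemma tau_R1_2 p : tau (R1_map p) 2 = tau p 1. Proof. by unf. Qed.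
Lemma taub_R1_0 p : taub (R1_map p) 0 = taub p 2. Proof. by unf. Qed.
Lemma taub_R1_2 p : taub (R1_map p) 2 = taub p 1. Proof. by unf. Qed.
End Pw.
Section Gen.
Variable F : numFieldType.
Notation V := ('I_9 -> F).
Definition s0 : V := fun _ => 1.

Definition GenP (P : V -> Prop) :=
  exists D : {mpoly F[9]}, D.@[s0] != 0 /\ forall x, D.@[x] != 0 -> P x.

Lemma GenP_true : GenP (fun _ => True).
Proof. by exists 1; rewrite meval1 oner_neq0. Qed.

Lemma GenP_and P Q : GenP P -> GenP Q -> GenP (fun x => P x /\ Q x).
Proof.
move=> [D1 [h1 H1]] [D2 [h2 H2]]; exists (D1 * D2); rewrite mevalM mulf_neq0 //.
by split=> // x; rewrite mevalM mulf_eq0 negb_or => /andP[/H1 ? /H2 ?].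
Qed.

Lemma GenP_mono (P Q : V -> Prop) : (forall x, P x -> Q x) -> GenP P -> GenP Q.
Proof. by move=> PQ [D [h H]]; exists D; split=> // x /H /PQ. Qed.

Definition Good (f : V -> F) := exists p q : {mpoly F[9]},
  GenP (fun x => q.@[x] != 0 /\ f x = p.@[x] / q.@[x]).

Lemma Good_nz f : Good f -> f s0 != 0 -> GenP (fun x => f x != 0).
Proof.
move=> [p [q [D [hD H]]]] fs.
have [qs fE] := H _ hD.
have ps : p.@[s0] != 0 by apply: contra fs; rewrite fE => /eqP ->; rewrite mul0r.
exists (D * p); rewrite mevalM mulf_neq0 //; split=> // x.
rewrite mevalM mulf_eq0 negb_or => /andP[/H [qx ->] px].
by rewrite mulf_neq0 // invr_eq0.
Qed.

Lemma Good_const c : Good (fun _ => c).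
Proof.
exists c%:MP, 1; apply: GenP_mono GenP_true => x _.
by rewrite mevalC meval1 divr1 oner_neq0.
Qed.

Lemma Good_var i : Good (fun x => x i).
Proof.
exists 'X_i, 1; apply: GenP_mono GenP_true => x _.
by rewrite mevalXU meval1 divr1 oner_neq0.
Qed.

Lemma Good_add f g : Good f -> Good g -> Good (fun x => f x + g x).
Proof.
move=> [p1 [q1 H1]] [p2 [q2 H2]]; exists (p1 * q2 + p2 * q1), (q1 * q2).
apply: GenP_mono (GenP_and H1 H2) => x [[n1 ->] [n2 ->]].
rewrite !mevalM mevalD !mevalM; split; first by rewrite mulf_neq0.
by field; repeat (apply/andP; split).
Qed.

Lemma Good_mul f g : Good f -> Good g -> Good (fun x => f x * g x).
Proof.
move=> [p1 [q1 H1]] [p2 [q2 H2]]; exists (p1 * p2), (q1 * q2).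
apply: GenP_mono (GenP_and H1 H2) => x [[n1 ->] [n2 ->]].
rewrite !mevalM; split; first by rewrite mulf_neq0.
by field; repeat (apply/andP; split).
Qed.

Lemma Good_opp f : Good f -> Good (fun x => - f x).
Proof.
move=> [p [q H]]; exists (- p), q.
apply: GenP_mono H => x [n ->]; by rewrite mevalN mulNr.
Qed.

Lemma Good_inv f : Good f -> f s0 != 0 -> Good (fun x => (f x)^-1).
Proof.
move=> Gf fs; have Hn := Good_nz Gf fs.
move: Gf => [p [q H]]; exists q, p.
apply: GenP_mono (GenP_and H Hn) => x [[n e] fx].
have px : p.@[x] != 0 by apply: contra fx; rewrite e => /eqP ->; rewrite mul0r.
by rewrite e invf_div.
Qed.

Lemma Good_ext f g : (forall x, f x = g x) -> Good f -> Good g.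
Proof. by move=> e [p [q H]]; exists p, q; apply: GenP_mono H => x; rewrite e. Qed.

Lemma Good_exp f n : Good f -> Good (fun x => f x ^+ n).
Proof.
move=> Gf; elim: n => [|n IH]; first by apply: (Good_const 1).
by apply: Good_ext (Good_mul Gf IH) => x; rewrite exprS.
Qed.

Definition GP (f : V -> F) := Good f /\ 0 < f s0.

Lemma GP_add f g : GP f -> GP g -> GP (fun x => f x + g x).
Proof. by move=> [? ?] [? ?]; split; [apply: Good_add | apply: addr_gt0]. Qed.
Lemma GP_mul f g : GP f -> GP g -> GP (fun x => f x * g x).
Proof. by move=> [? ?] [? ?]; split; [apply: Good_mul | apply: mulr_gt0]. Qed.
Lemma GP_inv f : GP f -> GP (fun x => (f x)^-1).
Proof. by move=> [? h]; split; [apply: Good_inv => //; rewrite gt_eqF | rewrite invr_gt0]. Qed.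
Lemma GP_exp f n : GP f -> GP (fun x => f x ^+ n).
Proof. by move=> [? h]; split; [apply: Good_exp | apply: exprn_gt0]. Qed.
Lemma GP_one : GP (fun _ => 1).
Proof. by split; [apply: Good_const | apply: ltr01]. Qed.
Lemma GP_var i : GP (fun x => x i).
Proof. by split; [apply: Good_var | apply: ltr01]. Qed.
Lemma GP_nz f : GP f -> GenP (fun x => f x != 0).
Proof. by move=> [G h]; apply: Good_nz G _; rewrite gt_eqF. Qed.

End Gen.

Section Pts.
Variable F : numFieldType.
Notation V := ('I_9 -> F).
Notation GP := (@GP F).
Notation GenP := (@GenP F).
Implicit Types Y Z W : V -> pt F.

Definition GoodPt Y :=
 [/\ forall j, GP (fun x => A (Y x) j), GP (fun x => cc (Y x)), GP (fun x => zz (Y x)),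
     forall j, GP (fun x => tau (Y x) j) & forall j, GP (fun x => taub (Y x) j)].

Ltac gp := repeat match goal with
 | |- GP _ => first [ match goal with H : forall j : 'I_3, GP _ |- _ => apply: H end
                     | match goal with H : GP _ |- _ => apply: H end
                     | apply: GP_one | apply: GP_var | apply: GP_exp | apply: GP_inv | apply: GP_mul | apply: GP_add ] end.

Lemma GoodPt_s i Y : GoodPt Y -> GoodPt (fun x => s_map i (Y x)).
Proof.
case=> hA hc hz ht hb; split=> [j|||j|j] /=; rewrite /u /uh /v /vh; gp.
all: have [e|ne] := eqVneq j i; rewrite /= ?(negbTE ne) /=; gp.
Qed.

Lemma GoodPt_pi Y : GoodPt Y -> GoodPt (fun x => pi_map (Y x)).
Proof. case=> hA hc hz ht hb; split=> [j|||j|j] /=; gp. Qed.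

Lemma GoodPt_w0 Y : GoodPt Y -> GoodPt (fun x => w0_map (Y x)).
Proof. case=> hA hc hz ht hb; split=> [j|||j|j] /=; rewrite /u; gp. Qed.

Lemma GoodPt_r Y : GoodPt Y -> GoodPt (fun x => r_map (Y x)).
Proof. case=> hA hc hz ht hb; split=> [j|||j|j] /=; gp. Qed.

Lemma GoodPt_R1 Y : GoodPt Y -> GoodPt (fun x => R1_map (Y x)).
Proof. by move=> H; apply: (GoodPt_s 1 (GoodPt_pi (GoodPt_pi H))). Qed.
Lemma GoodPt_R1i Y : GoodPt Y -> GoodPt (fun x => R1inv_map (Y x)).
Proof. by move=> H; apply: (GoodPt_pi (GoodPt_s 1 H)). Qed.
Lemma GoodPt_T4 Y : GoodPt Y -> GoodPt (fun x => T4_map (Y x)).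
Proof. by move=> H; apply: (GoodPt_w0 (GoodPt_r H)). Qed.
Lemma GoodPt_T4i Y : GoodPt Y -> GoodPt (fun x => T4inv_map (Y x)).
Proof. by move=> H; apply: (GoodPt_r (GoodPt_w0 H)). Qed.

Lemma GenP_andb (P Q : V -> bool) : GenP P -> GenP Q -> GenP (fun x => P x && Q x).
Proof. by move=> h1 h2; apply: GenP_mono (GenP_and h1 h2) => x [-> ->]. Qed.

Lemma GoodPt_allc Y : GoodPt Y -> GenP (fun x => allc (Y x)).
Proof.
case=> hA hc hz ht hb; rewrite /allc /conds.
repeat apply: GenP_andb; apply: GP_nz; gp.
Qed.

Definition GC Y := GoodPt Y /\ GenP (fun x => Cst (Y x)).

Lemma GC_allc Y : GC Y -> GenP (fun x => Cst (Y x) /\ allc (Y x)).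
Proof. by case=> G C; apply: GenP_and => //; apply: GoodPt_allc. Qed.

Lemma allc_nz (p : pt F) : allc p -> A p 0 != 0 /\ zz p != 0.
Proof. by case/andP => -> /andP[-> _]. Qed.

Lemma GC_R1 Y : GC Y -> GC (fun x => R1_map (Y x)).
Proof.
move=> H; split; first by apply: GoodPt_R1; case: H.
apply: GenP_mono (GC_allc H) => x [C /allc_nz [h1 h2]]; exact: Cst_R1.
Qed.
Lemma GC_R1i Y : GC Y -> GC (fun x => R1inv_map (Y x)).
Proof.
move=> H; split; first by apply: GoodPt_R1i; case: H.
apply: GenP_mono (GC_allc H) => x [C /allc_nz [h1 h2]]; exact: Cst_R1i.
Qed.
Lemma GC_T4 Y : GC Y -> GC (fun x => T4_map (Y x)).
Proof. by case=> G C; split; [apply: GoodPt_T4 | apply: GenP_mono C => x; apply: Cst_T4]. Qed.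
Lemma GC_T4i Y : GC Y -> GC (fun x => T4inv_map (Y x)).
Proof. by case=> G C; split; [apply: GoodPt_T4i | apply: GenP_mono C => x; apply: Cst_T4i]. Qed.

Lemma GC_iter (f : pt F -> pt F) n Y : (forall W, GC W -> GC (fun x => f (W x))) ->
  GC Y -> GC (fun x => iter n f (Y x)).
Proof. by move=> hf hY; elim: n => [|n IH] //=; apply: hf. Qed.

Lemma GC_iterZ (f g : pt F -> pt F) n Y : (forall W, GC W -> GC (fun x => f (W x))) ->
  (forall W, GC W -> GC (fun x => g (W x))) ->
  GC Y -> GC (fun x => iterZ n f g (Y x)).
Proof. by move=> hf hg hY; case: n => n; [apply: (@GC_iter f n) | apply: (@GC_iter g n.+1)]. Qed.

Lemma GC_spec : GC (fun x => spec_pt x).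
Proof.
split.
  split=> [||||]; try apply: I3_ind; rewrite /spec_pt /= ?idxE /crd; gp.
apply: GenP_mono (@GenP_true F) => x _; rewrite /Cst /spec_pt /= ?idxE; done.
Qed.

Lemma GenP_trans (T : Type) (f g h : V -> T) : GenP (fun x => f x = g x) -> GenP (fun x => g x = h x) ->
  GenP (fun x => f x = h x).
Proof. by move=> h1 h2; apply: GenP_mono (GenP_and h1 h2) => x [-> ->]. Qed.
Lemma GenP_sym (T : Type) (f g : V -> T) : GenP (fun x => f x = g x) -> GenP (fun x => g x = f x).
Proof. by apply: GenP_mono. Qed.
Lemma GenP_map (T U : Type) (M : T -> U) (f g : V -> T) : GenP (fun x => f x = g x) ->
  GenP (fun x => M (f x) = M (g x)).
Proof. by apply: GenP_mono => x ->. Qed.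
Lemma GenP_refl (T : Type) (f : V -> T) : GenP (fun x => f x = f x).
Proof. by apply: GenP_mono (@GenP_true F). Qed.

Lemma G1 Y : GC Y -> GenP (fun x => R1_map (R1inv_map (Y x)) = Y x).
Proof. by move/GC_allc; apply: GenP_mono => x [C H]; apply: P1. Qed.
Lemma G2 Y : GC Y -> GenP (fun x => R1inv_map (R1_map (Y x)) = Y x).
Proof. by move/GC_allc; apply: GenP_mono => x [C H]; apply: P2. Qed.
Lemma G3 Y : GC Y -> GenP (fun x => T4_map (T4inv_map (Y x)) = Y x).
Proof. by move/GC_allc; apply: GenP_mono => x [C H]; apply: P3. Qed.
Lemma G4 Y : GC Y -> GenP (fun x => T4inv_map (T4_map (Y x)) = Y x).
Proof. by move/GC_allc; apply: GenP_mono => x [C H]; apply: P4. Qed.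
Lemma G5 Y : GC Y -> GenP (fun x => R1_map (T4_map (Y x)) = T4_map (R1_map (Y x))).
Proof. by move/GC_allc; apply: GenP_mono => x [C H]; apply: P5. Qed.

Lemma G6 Y : GC Y -> GenP (fun x => T4inv_map (R1_map (Y x)) = R1_map (T4inv_map (Y x))).
Proof.
move=> H; have HZ := GC_T4i H.
have e0 := G3 H; have e5 := G5 HZ; have e4 := G4 (GC_R1 HZ).
apply: GenP_mono (GenP_and e0 (GenP_and e5 e4)) => x [E0 [E5 E4]].
by rewrite -{1}E0 E5 E4.
Qed.


Lemma comm_iter (f g : pt F -> pt F) : (forall W, GC W -> GC (fun x => f (W x))) ->
 (forall W, GC W -> GenP (fun x => f (g (W x)) = g (f (W x)))) ->
 forall n Z, GC Z -> GenP (fun x => iter n f (g (Z x)) = g (iter n f (Z x))).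
Proof.
move=> hf hc n Z hZ; elim: n => [|n IH]; first exact: GenP_refl.
have e := hc _ (GC_iter n hf hZ).
by apply: GenP_mono (GenP_and IH e) => x [E1 E2] /=; rewrite E1 E2.
Qed.

Lemma L_T4R1 N Z : GC Z -> GenP (fun x => iterZ N (@T4_map F) (@T4inv_map F) (R1_map (Z x)) = R1_map (iterZ N (@T4_map F) (@T4inv_map F) (Z x))).
Proof.
case: N => n hZ.
  apply: (comm_iter (@GC_T4) _ n hZ) => W hW.
  by apply: GenP_mono (G5 hW) => x ->.
by apply: (comm_iter (@GC_T4i) _ n.+1 hZ) => W hW; apply: G6.
Qed.

Lemma LN j N X : GC X -> GenP (fun x => iter j (@R1_map F) (iterZ N (@T4_map F) (@T4inv_map F) (X x)) = iterZ N (@T4_map F) (@T4inv_map F) (iter j (@R1_map F) (X x))).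
Proof.
move=> hX; apply: (comm_iter (@GC_R1) _ j hX) => W hW.
by apply: GenP_mono (L_T4R1 N hW) => x ->.
Qed.

Lemma L_R1succ k Z : GC Z -> GenP (fun x => iterZ (k + 1) (@R1_map F) (@R1inv_map F) (Z x) = R1_map (iterZ k (@R1_map F) (@R1inv_map F) (Z x))).
Proof.
move=> hZ; case: k => [n|[|m]].
- have -> : (n%:Z + 1 = n.+1%:Z)%R by rewrite -PoszD addn1.
  exact: GenP_refl.
- have -> : (Negz 0 + 1 = 0 :> int)%R by [].
  by apply: GenP_mono (G1 hZ) => x ->.
- have -> : (Negz m.+1 + 1 = Negz m :> int)%R by rewrite !NegzE -[m.+2]addn1 PoszD opprD addrNK.
  by apply: GenP_mono (G1 (GC_iter m.+1 (@GC_R1i) hZ)) => x /= ->.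
Qed.

Lemma L_T4succ N Z : GC Z -> GenP (fun x => iterZ (N + 1) (@T4_map F) (@T4inv_map F) (Z x) = T4_map (iterZ N (@T4_map F) (@T4inv_map F) (Z x))).
Proof.
move=> hZ; case: N => [n|[|m]].
- have -> : (n%:Z + 1 = n.+1%:Z)%R by rewrite -PoszD addn1.
  exact: GenP_refl.
- have -> : (Negz 0 + 1 = 0 :> int)%R by [].
  by apply: GenP_mono (G3 hZ) => x ->.
- have -> : (Negz m.+1 + 1 = Negz m :> int)%R by rewrite !NegzE -[m.+2]addn1 PoszD opprD addrNK.
  by apply: GenP_mono (G3 (GC_iter m.+1 (@GC_T4i) hZ)) => x /= ->.
Qed.

Lemma L_T4pred N Z : GC Z -> GenP (fun x => iterZ (N - 1) (@T4_map F) (@T4inv_map F) (Z x) = T4inv_map (iterZ N (@T4_map F) (@T4inv_map F) (Z x))).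
Proof.
move=> hZ; case: N => [[|m]|n].
- have -> : (0%:Z - 1 = Negz 0)%R by [].
  exact: GenP_refl.
- have -> : (m.+1%:Z - 1 = m%:Z)%R by rewrite -addn1 PoszD addrK.
  by apply: GenP_mono (G4 (GC_iter m (@GC_T4) hZ)) => x /= ->.
- have -> : (Negz n - 1 = Negz n.+1)%R by rewrite !NegzE -[n.+2]addn1 PoszD opprD.
  exact: GenP_refl.
Qed.

Lemma Lk k j Z : GC Z -> GenP (fun x => iterZ (k + j%:Z) (@R1_map F) (@R1inv_map F) (Z x) = iter j (@R1_map F) (iterZ k (@R1_map F) (@R1inv_map F) (Z x))).
Proof.
move=> hZ; elim: j => [|j IH].
  rewrite addr0; exact: GenP_refl.
have -> : (k + j.+1%:Z = (k + j%:Z) + 1)%R by rewrite -addn1 PoszD addrA.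
by apply: GenP_mono (GenP_and (L_R1succ (k + j%:Z) hZ) IH) => x [-> ->].
Qed.

Lemma iter_pres (T : Type) (h : pt F -> T) f n p : (forall q, h (f q) = h q) -> h (iter n f p) = h p.
Proof. by move=> hf; elim: n => //= n <-. Qed.
Lemma iterZ_pres (T : Type) (h : pt F -> T) f g n p : (forall q, h (f q) = h q) -> (forall q, h (g q) = h q) ->
  h (iterZ n f g p) = h p.
Proof. by move=> hf hg; case: n => n; [exact: (iter_pres n p hf) | exact: (iter_pres n.+1 p hg)]. Qed.

End Pts.

Section Ex.
Variable F : fieldType.
Variables (k N : int) (z : F).
Hypothesis hz : z != 0.
Lemma pw2 (e : int) : (z ^+ 2) ^ e = (z ^ e) ^+ 2.
Proof. by rewrite -[z ^+ 2]/(z ^ (2%:Z)) exprzAC. Qed.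
Lemma e1a : z ^ (k - 4*N + 2) = z^k * ((z^N)^+4)^-1 * z^+2.
Proof. by rewrite !expfzDr // -invr_expz (mulrC 4 N) -exprz_exp. Qed.
Lemma e2a : z ^ (k + 4*N + 2) = z^k * (z^N)^+4 * z^+2.
Proof. by rewrite !expfzDr // (mulrC 4 N) -exprz_exp. Qed.
Lemma e3a : z ^ (- (3*k - 4*N + 4)) = ((z^k)^+3 * ((z^N)^+4)^-1 * z^+4)^-1.
Proof. by rewrite -invr_expz !expfzDr // -invr_expz (mulrC 4 N) (mulrC 3 k) -!exprz_exp. Qed.
Lemma e4a : z ^ (- (3*k + 4*N + 8)) = ((z^k)^+3 * (z^N)^+4 * z^+8)^-1.
Proof. by rewrite -invr_expz !expfzDr // (mulrC 4 N) (mulrC 3 k) -!exprz_exp. Qed.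
Lemma e1b : (z^+2) ^ (- k + 4*N - 2) = ((z^k)^-1 * (z^N)^+4 * (z^+2)^-1)^+2.
Proof. by rewrite pw2 !expfzDr // -!invr_expz (mulrC 4 N) -exprz_exp. Qed.
Lemma e2b : (z^+2) ^ (- k - 4*N - 2) = ((z^k)^-1 * ((z^N)^+4)^-1 * (z^+2)^-1)^+2.
Proof. by rewrite pw2 !expfzDr // -!invr_expz (mulrC 4 N) -exprz_exp. Qed.
Lemma e3b : (z^+2) ^ (- 3*k + 4*N - 4) = (((z^k)^+3)^-1 * (z^N)^+4 * (z^+4)^-1)^+2.
Proof. by rewrite pw2 !expfzDr // mulNr -!invr_expz (mulrC 4 N) (mulrC 3 k) -!exprz_exp. Qed.
Lemma e4b : (z^+2) ^ (- 3*k - 4*N - 8) = (((z^k)^+3)^-1 * ((z^N)^+4)^-1 * (z^+8)^-1)^+2.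
Proof. by rewrite pw2 !expfzDr // mulNr -!invr_expz (mulrC 4 N) (mulrC 3 k) -!exprz_exp. Qed.
Lemma eN : (z^+2) ^ N = (z^N)^+2.
Proof. exact: pw2. Qed.
End Ex.

Section Params.
Variable F : numFieldType.
Notation GenP := (@GenP F).

Lemma cc_iterZ (n : int) (p : pt F) : cc (iterZ n (@T4_map F) (@T4inv_map F) p) = cc p * (zz p ^+ 2) ^ n.
Proof.
have zzi m f : (forall q, zz (f q) = zz q) -> zz (iter m f p) = zz p by move=> h; apply: iter_pres.
case: n => n.
  rewrite -exprnP /=; elim: n => [|n IH]; first by rewrite expr0 mulr1.
  by rewrite iterS cc_T4 (zzi n (@T4_map F) (fun q => erefl)) IH (exprS (zz p ^+ 2)) mulrCA.
suff H : forall m, cc (iter m (@T4inv_map F) p) = cc p * ((zz p ^+ 2) ^+ m)^-1 by exact: H.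
elim=> [|m IH]; first by rewrite expr0 invr1 mulr1.
by rewrite iterS cc_T4i (zzi m (@T4inv_map F) (fun q => erefl)) IH (exprSr (zz p ^+ 2)) (invfM ((zz p ^+ 2) ^+ m)) mulrA.
Qed.

Lemma A0_iterZ (n : int) Z : GC Z -> GenP (fun x => A (iterZ n (@R1_map F) (@R1inv_map F) (Z x)) 0 = A (Z x) 0 * zz (Z x) ^ n).
Proof.
move=> hZ.
have zzi (m : nat) (f : pt F -> pt F) (p : pt F) : (forall q, zz (f q) = zz q) -> zz (iter m f p) = zz p by move=> hh; exact: (iter_pres m p hh).
case: n => n.
  suff H : forall m, GenP (fun x => A (iter m (@R1_map F) (Z x)) 0 = A (Z x) 0 * (zz (Z x)) ^+ m) by exact: H.
  elim=> [|m IH]; first by apply: GenP_mono (@GenP_true F) => x _; rewrite expr0 mulr1.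
  have C := (GC_iter m (@GC_R1 F) hZ).2.
  apply: GenP_mono (GenP_and IH C) => x [E Cx].
  by rewrite iterS A0_R1 // E (zzi m (@R1_map F) (Z x) (fun q => erefl)) (exprS (zz (Z x))) mulrCA.
suff H : forall m, GenP (fun x => A (iter m (@R1inv_map F) (Z x)) 0 = A (Z x) 0 * ((zz (Z x)) ^+ m)^-1).
  exact: H.
elim=> [|m IH]; first by apply: GenP_mono (@GenP_true F) => x _; rewrite expr0 invr1 mulr1.
have C := (GC_iter m (@GC_R1i F) hZ).2.
apply: GenP_mono (GenP_and IH C) => x [E Cx].
by rewrite iterS A0_R1i // E (zzi m (@R1inv_map F) (Z x) (fun q => erefl)) (exprSr (zz (Z x))) (invfM (zz (Z x) ^+ m)) mulrA.
Qed.
End Params.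

Section Main.
Variable F : numFieldType.
Notation GenP := (@GenP F).
Variables k N : int.
Definition Xk (x : 'I_9 -> F) := iterZ k (@R1_map F) (@R1inv_map F) (spec_pt x).
Definition Yk (x : 'I_9 -> F) := iterZ N (@T4_map F) (@T4inv_map F) (Xk x).

Lemma GC_X : GC Xk.
Proof. exact: (GC_iterZ k (@GC_R1 F) (@GC_R1i F) (@GC_spec F)). Qed.
Lemma GC_Y : GC Yk.
Proof. exact: (GC_iterZ N (@GC_T4 F) (@GC_T4i F) GC_X). Qed.

Lemma TT0 j : GenP (fun x => tauKN x (k + j%:Z) N = tau (iter j (@R1_map F) (Yk x)) 1).
Proof.
have e1 := Lk k j (@GC_spec F); have e2 := LN j N GC_X.
apply: GenP_mono (GenP_and e1 e2) => x [E1 E2].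
by rewrite /tauKN E1 /Yk E2 /Xk.
Qed.

Lemma TT1 j : GenP (fun x => tauKN x (k + j%:Z) (N + 1) = tau (T4_map (iter j (@R1_map F) (Yk x))) 1).
Proof.
have e1 := Lk k j (@GC_spec F); have e2 := LN j N GC_X.
have e3 := L_T4succ N (GC_iter j (@GC_R1 F) GC_X).
apply: GenP_mono (GenP_and e1 (GenP_and e2 e3)) => x [E1 [E2 E3]].
by rewrite /tauKN E1 E3 /Yk E2 /Xk.
Qed.

Lemma TTm j : GenP (fun x => tauKN x (k + j%:Z) (N - 1) = tau (T4inv_map (iter j (@R1_map F) (Yk x))) 1).
Proof.
have e1 := Lk k j (@GC_spec F); have e2 := LN j N GC_X.
have e3 := L_T4pred N (GC_iter j (@GC_R1 F) GC_X).
apply: GenP_mono (GenP_and e1 (GenP_and e2 e3)) => x [E1 [E2 E3]].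
by rewrite /tauKN E1 E3 /Yk E2 /Xk.
Qed.

Lemma zzY x : zz (Yk x) = crd x 0.
Proof. by rewrite /Yk /Xk (iterZ_pres (h := @zz F)) // (iterZ_pres (h := @zz F)). Qed.
Lemma ccY x : cc (Yk x) = crd x 2 * (crd x 0 ^+ 2) ^ N.
Proof. by rewrite /Yk cc_iterZ /Xk (iterZ_pres (h := @zz F)) // (iterZ_pres (h := @cc F)). Qed.
Lemma AY : GenP (fun x => A (Yk x) 0 = crd x 1 * crd x 0 ^ k).
Proof.
apply: GenP_mono (A0_iterZ k (@GC_spec F)) => x.
by move=> E; rewrite /Yk (iterZ_pres (h := @A F)) // /Xk E.
Qed.

Ltac closer2 := repeat match goal with |- is_true (_ && _) => apply/andP; split end; rewrite ?oner_neq0 //.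

Lemma main_GenP : GenP (fun x =>
    let T := tauKN x in
    let Qh := crd x 0 in
    let Q := Qh ^+ 2 in
    let a0 := crd x 1 in
    let g := crd x 2 in
    [/\ T (k+1) (N+1) * T (k+2) (N-1)
          - Qh ^ (k - 4*N + 2) * g ^- 2 * a0 * T (k+3) N * T k N
          - Q ^ (- k + 4*N - 2) * g ^+ 4 * a0 ^- 2 * T (k+1) N * T (k+2) N = 0,
        T (k+2) (N+1) * T (k+1) (N-1)
          - Qh ^ (k + 4*N + 2) * g ^+ 2 * a0 * T (k+3) N * T k N
          - Q ^ (- k - 4*N - 2) * g ^- 4 * a0 ^- 2 * T (k+2) N * T (k+1) N = 0,
        Qh ^ (- (3*k - 4*N + 4)) * g ^+ 2 * a0 ^- 3 * T (k+3) N * T k (N+1)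
          - Q ^ (- 3*k + 4*N - 4) * g ^+ 4 * a0 ^- 6 * T (k+1) N * T (k+2) (N+1)
          - T (k+1) (N+1) * T (k+2) N = 0 &
        Qh ^ (- (3*k + 4*N + 8)) * g ^- 2 * a0 ^- 3 * T (k+3) (N+1) * T k N
          - Q ^ (- 3*k - 4*N - 8) * g ^- 4 * a0 ^- 6 * T (k+2) N * T (k+1) (N+1)
          - T (k+2) (N+1) * T (k+1) N = 0]).
Proof.
have hY := GC_Y.
have hQ := GC_R1 hY. have hP := GC_R1 hQ.
have cP := GC_allc hP. have cQ := GC_allc hQ. have cY := GC_allc hY.
have cS := GC_allc (@GC_spec F).
have t10 := TT0 1. have t20 := TT0 2. have t30 := TT0 3.
have t01 := TT1 0. have t11 := TT1 1. have t21 := TT1 2. have t31 := TT1 3.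
have t1m := TTm 1. have t2m := TTm 2.
have hA := AY.
apply: GenP_mono (GenP_and cP (GenP_and cQ (GenP_and cY (GenP_and cS (GenP_and hA (GenP_and t10 (GenP_and t20 (GenP_and t30 (GenP_and t01 (GenP_and t11 (GenP_and t21 (GenP_and t31 (GenP_and t1m t2m)))))))))))))
  => x [[CP aP] [[CQ aQ] [[CY aY] [[CS aS] [EA [E10 [E20 [E30 [E01 [E11 [E21 [E31 [E1m E2m]]]]]]]]]]]]].
move=> T Qh Q a0 g; rewrite {}/T {}/Q {}/Qh {}/a0 {}/g.
move: aS; rewrite /allc /conds /spec_pt /= ?idxE => /and4P [hs1 hs0 hs2 _].
have hE : crd x 0 ^ k != 0 by apply: expfz_neq0.
have hM : crd x 0 ^ N != 0 by apply: expfz_neq0.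
rewrite addr0 in E01.
have AQ : A (R1_map (Yk x)) 0 = crd x 0 * (crd x 1 * crd x 0 ^ k) by rewrite A0_R1 // zzY EA.
have AP : A (R1_map (R1_map (Yk x))) 0 = crd x 0 * (crd x 0 * (crd x 1 * crd x 0 ^ k)) by rewrite A0_R1 // zz_R1 zzY AQ.
split.
- apply: (B1 CP aP).
  + by rewrite E11 taub_R1_2.
  + by rewrite E2m.
  + by rewrite E30.
  + by rewrite tau_R1_0 tau_R1_2.
  + by rewrite E10 tau_R1_2.
  + by rewrite E20.
  + rewrite !zz_R1 !cc_R1 zzY ccY AP (e1a _ _ hs0) eN; field; closer2.
  + rewrite !zz_R1 !cc_R1 zzY ccY AP (e1b _ _ hs0) eN; field; closer2.
- apply: (B2 CQ aQ).
  + by rewrite E21.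
  + by rewrite E1m.
  + by rewrite E30.
  + by rewrite tau_R1_2.
  + by rewrite E20.
  + by rewrite E10.
  + rewrite !zz_R1 !cc_R1 zzY ccY AQ (e2a _ _ hs0) eN; field; closer2.
  + rewrite !zz_R1 !cc_R1 zzY ccY AQ (e2b _ _ hs0) eN; field; closer2.
- apply: (B3 CP aP).
  + by rewrite E11 taub_R1_2.
  + by rewrite E20.
  + by rewrite E30.
  + by rewrite E01 taub_R1_0 taub_R1_2.
  + by rewrite E10 tau_R1_2.
  + by rewrite E21.
  + rewrite !zz_R1 !cc_R1 zzY ccY AP (e3a _ _ hs0) eN; field; closer2.
  + rewrite !zz_R1 !cc_R1 zzY ccY AP (e3b _ _ hs0) eN; field; closer2.
- apply: (B4 CP aP).
  + by rewrite E21.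
  + by rewrite E10 tau_R1_2.
  + by rewrite E31.
  + by rewrite tau_R1_0 tau_R1_2.
  + by rewrite E20.
  + by rewrite E11 taub_R1_2.
  + rewrite !zz_R1 !cc_R1 zzY ccY AP (e4a _ _ hs0) eN; field; closer2.
  + rewrite !zz_R1 !cc_R1 zzY ccY AP (e4b _ _ hs0) eN; field; closer2.
Qed.
End Main.

Theorem propositionB7 (R : realType) (k N : int) :
  exists D : {mpoly R[i][9]}, D != 0 /\
  forall x : 'I_9 -> R[i], D.@[x] != 0 ->
    let T := tauKN x in
    let Qh := crd x 0 in (* Q^{1/2} = q^{1/12} *)
    let Q := Qh ^+ 2 in  (* Q = q^{1/6} *)
    let a0 := crd x 1 in (* alpha_0 = a_0^{1/6} *)
    let g := crd x 2 in  (* gamma = c^{1/6} *)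
    [/\ T (k+1) (N+1) * T (k+2) (N-1)
          - Qh ^ (k - 4*N + 2) * g ^- 2 * a0 * T (k+3) N * T k N
          - Q ^ (- k + 4*N - 2) * g ^+ 4 * a0 ^- 2 * T (k+1) N * T (k+2) N = 0,
        T (k+2) (N+1) * T (k+1) (N-1)
          - Qh ^ (k + 4*N + 2) * g ^+ 2 * a0 * T (k+3) N * T k N
          - Q ^ (- k - 4*N - 2) * g ^- 4 * a0 ^- 2 * T (k+2) N * T (k+1) N = 0,
        Qh ^ (- (3*k - 4*N + 4)) * g ^+ 2 * a0 ^- 3 * T (k+3) N * T k (N+1)
          - Q ^ (- 3*k + 4*N - 4) * g ^+ 4 * a0 ^- 6 * T (k+1) N * T (k+2) (N+1)
          - T (k+1) (N+1) * T (k+2) N = 0 &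
        Qh ^ (- (3*k + 4*N + 8)) * g ^- 2 * a0 ^- 3 * T (k+3) (N+1) * T k N
          - Q ^ (- 3*k - 4*N - 8) * g ^- 4 * a0 ^- 6 * T (k+2) N * T (k+1) (N+1)
          - T (k+2) (N+1) * T (k+1) N = 0].
Proof.
have [D [hs H]] := @main_GenP (R[i]) k N.
exists D; split; first by apply: contraNneq hs => ->; rewrite meval0.
exact: H.
Qed.
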